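(* For every $n\ge1$ and every optimal $n$-town $S$, $\max\{w(S),h(S)\}\le 2\sqrt{n}+5$.
   Context: An $n$-town is a set $S\subset\mathbb{Z}\times\mathbb{Z}$ of exactly $n$ distinct grid points; its cost is $c(S)=\frac12\sum_{s\in S}\sum_{t\in S}\|s-t\|_1$ (Manhattan distance), and it is optimal if its cost is minimum among all $n$-towns. For $i\in\mathbb{Z}$, the $i$-th column of $S$ is $C_i=\{(i,y)\in S\}$ and the $i$-th row is $R_i=\{(x,i)\in S\}$. The width of $S$ is $w(S)=\max_{i}|R_i|$ and the height is $h(S)=\max_{i}|C_i|$. *)

(* Defs.v *)
From mathcomp Require Import all_boot all_order all_algebra.
Set Implicit Arguments. Unset Strict Implicit. Unset Printing Implicit Defensive.
Import Order.TTheory GRing.Theory Num.Theory.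

Definition point := (int * int)%type.

Definition is_town (n : nat) (S : seq point) : Prop := uniq S /\ size S = n.

Definition l1dist (s t : point) : int := `|s.1 - t.1|%R + `|s.2 - t.2|%R.

Definition cost (S : seq point) : rat :=
  ((\sum_(s <- S) \sum_(t <- S) l1dist s t)%R)%:~R / 2%:R.

Definition optimal_town (n : nat) (S : seq point) : Prop :=
  is_town n S /\ forall T, is_town n T -> (cost S <= cost T)%R.

Definition column (S : seq point) (i : int) : seq point := [seq p <- S | p.1 == i].
Definition row (S : seq point) (i : int) : seq point := [seq p <- S | p.2 == i].

(* width = max_i |R_i| and height = max_i |C_i|; the max over all i in Z is
   attained at coordinates of points of S (other rows/columns are empty). *)
Definition width (S : seq point) : nat := \max_(p <- S) size (row S p.2).
Definition height (S : seq point) : nat := \max_(p <- S) size (column S p.1).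

(* Main.v *)
Require Import Defs.
From mathcomp Require Import all_boot all_order all_algebra.
From mathcomp Require Import zify ring.

Module Aux.
Set Implicit Arguments. Unset Strict Implicit. Unset Printing Implicit Defensive.
Import Order.TTheory GRing.Theory Num.Theory.
Local Open Scope ring_scope.

Definition dsum (S : seq point) : int := \sum_(s <- S) \sum_(t <- S) l1dist s t.

Lemma l1distC s t : l1dist s t = l1dist t s.
Proof. rewrite /l1dist; lia. Qed.
Lemma l1dist0 s : l1dist s s = 0.
Proof. rewrite /l1dist; lia. Qed.
Lemma l1dist_ge0 s t : 0 <= l1dist s t.
Proof. rewrite /l1dist; lia. Qed.
Lemma l1dist_pos s t : s != t -> 1 <= l1dist s t.
Proof.
case: s t => [s1 s2] [t1 t2]; rewrite /l1dist /= xpair_eqE negb_and.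
case/orP=> /eqP H; lia.
Qed.

Lemma sum_cons (F : point -> int) p s :
  \sum_(t <- p :: s) F t = F p + \sum_(t <- s) F t.
Proof. by rewrite big_cons. Qed.

Lemma dsum_cons p s : dsum (p :: s) = 2 * \sum_(t <- s) l1dist p t + dsum s.
Proof.
rewrite /dsum sum_cons; cbv beta; rewrite sum_cons l1dist0 add0r.
under [\sum_(u <- s) \sum_(t <- p :: s) _]eq_bigr => u _ do rewrite sum_cons l1distC.
have -> : \sum_(u <- s) (l1dist p u + \sum_(t <- s) l1dist u t) =
   \sum_(u <- s) l1dist p u + \sum_(u <- s) \sum_(t <- s) l1dist u t.
  by rewrite big_split.
set X := \sum_(u <- s) l1dist p u; set Y := \sum_(u <- s) _.
lia.
Qed.

Lemma dsum_perm s1 s2 : perm_eq s1 s2 -> dsum s1 = dsum s2.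
Proof.
move=> P; rewrite /dsum (perm_big _ P).
by apply: eq_bigr => u _; rewrite (perm_big _ P).
Qed.

Lemma cost_le S T : (cost S <= cost T)%R -> dsum S <= dsum T.
Proof.
rewrite /cost -/(dsum S) -/(dsum T).
rewrite ler_pM2r ?invr_gt0 ?ltr0n // ler_int //.
Qed.

Lemma exchange n S p q : optimal_town n S -> p \in S -> q \notin S ->
  \sum_(t <- S) l1dist p t < \sum_(t <- S) l1dist q t.
Proof.
move=> [[uS sS] opt] pS qS.
have P := perm_to_rem pS.
set S' := rem p S in P.
have qS' : q \notin S'.
  apply: contra qS; exact: mem_rem.
have uS' : uniq S' by apply: rem_uniq.
have T : is_town n (q :: S').
  split; first by rewrite /= qS' uS'.
  have hs : (0 < size S)%N by move: pS; clear; case: S.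
  by rewrite /= size_rem // prednK.
have := cost_le (opt _ T).
rewrite (dsum_perm P) !dsum_cons => H.
have H2 : \sum_(t <- S') l1dist p t <= \sum_(t <- S') l1dist q t.
  by move: H; rewrite lerD2r ler_pM2l.
rewrite !(perm_big _ P) !sum_cons l1dist0 add0r.
have : 1 <= l1dist q p.
  apply: l1dist_pos; apply: contraNneq qS => ->; done.
lia.
Qed.

Lemma seq_argmin (T : eqType) (s : seq T) (phi : T -> int) : s != [::] ->
  exists2 x, x \in s & forall y, y \in s -> phi x <= phi y.
Proof.
elim: s => // x s IH _.
case: (altP (s =P [::])) => [->|sn].
  by exists x; rewrite ?mem_head // => y; rewrite inE => /eqP ->.
have [z zs Hz] := IH sn.
case: (lerP (phi x) (phi z)) => H.
  exists x; first exact: mem_head.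
  move=> y; rewrite inE => /orP [/eqP -> //|/Hz]; exact: le_trans.
exists z; first by rewrite inE zs orbT.
move=> y; rewrite inE => /orP [/eqP -> |/Hz //]; exact: ltW.
Qed.

Lemma seq_argmax (T : eqType) (s : seq T) (phi : T -> int) : s != [::] ->
  exists2 x, x \in s & forall y, y \in s -> phi y <= phi x.
Proof.
move=> /(seq_argmin (fun t => - phi t)) [x xs H]; exists x => // y /H.
by rewrite lerN2.
Qed.

Lemma sum_ind1 (x a : int) (W : nat) (F : nat -> int) :
  a <= x < a + W%:Z ->
  \sum_(0 <= i < W) (x == a + i%:Z)%:R * F i = F `|x - a|%N.
Proof.
move=> /andP [h1 h2].
have iin : `|x - a|%N \in index_iota 0 W by rewrite mem_index_iota; lia.
rewrite (bigD1_seq _ iin (iota_uniq _ _)) /=.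
rewrite big1 ?addr0.
  have -> : x == a + `|x - a|%N%:Z by apply/eqP; lia.
  by rewrite mul1r.
move=> i ne.
have -> : (x == a + i%:Z) = false by apply/eqP; move: ne => /eqP; lia.
by rewrite mul0r.
Qed.

Lemma eq_pair_R (t : point) x y :
  (t == (x, y))%:R = (t.1 == x)%:R * (t.2 == y)%:R :> int.
Proof. by case: t => t1 t2; rewrite xpair_eqE /=; case: eqP; case: eqP. Qed.

Lemma sum_grid1 (t : point) (a c : int) (W H : nat) (psi : int -> int -> int) :
  a <= t.1 < a + W%:Z -> c <= t.2 < c + H%:Z ->
  \sum_(0 <= i < W) \sum_(0 <= j < H)
     (t == (a + i%:Z, c + j%:Z))%:R * psi (a + i%:Z) (c + j%:Z) = psi t.1 t.2.
Proof.
move=> h1 h2.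
under eq_bigr => i _.
  under eq_bigr => j _ do rewrite eq_pair_R -mulrA.
  rewrite -big_distrr /= sum_ind1 //.
over.
rewrite /= sum_ind1 //.
have -> : a + `|t.1 - a|%N%:Z = t.1 by lia.
by have -> : c + `|t.2 - c|%N%:Z = t.2 by lia.
Qed.

Lemma grid_sum (S : seq point) (a c : int) (W H : nat) (psi : int -> int -> int) :
  uniq S ->
  (forall t, t \in S -> a <= t.1 < a + W%:Z /\ c <= t.2 < c + H%:Z) ->
  \sum_(t <- S) psi t.1 t.2 =
  \sum_(0 <= i < W) \sum_(0 <= j < H)
     ((a + i%:Z, c + j%:Z) \in S)%:R * psi (a + i%:Z) (c + j%:Z).
Proof.
move=> uS box.
have E : forall i j, ((a + i%:Z, c + j%:Z) \in S)%:R * psi (a + i%:Z) (c + j%:Z) =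
   \sum_(t <- S) (t == (a + i%:Z, c + j%:Z))%:R * psi (a + i%:Z) (c + j%:Z).
  move=> i j; rewrite -big_distrl /= -(count_uniq_mem _ uS).
  congr (_ * _); rewrite -sum1_count natr_sum.
  by rewrite big_mkcond; apply: eq_bigr => t _ /=; case: (t == _).
under [RHS]eq_bigr => i _ do under eq_bigr => j _ do rewrite E.
under [RHS]eq_bigr => i _ do rewrite exchange_big /=.
rewrite exchange_big /=.
rewrite big_seq_cond [RHS]big_seq_cond.
apply: eq_bigr => t /andP [tS _].
have [h1 h2] := box t tS.
by rewrite sum_grid1.
Qed.

Lemma sum_ind_le (L : nat) (b : nat -> bool) :
  \sum_(0 <= i < L) (b i)%:R <= L%:Z :> int.
Proof.
apply: (@le_trans _ _ (\sum_(0 <= i < L) (1 : int))).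
  by apply: ler_sum_nat => i _; case: (b i).
by rewrite sumr_const_nat subn0 natz.
Qed.

Lemma sum_ind_ge0 (L : nat) (b : nat -> bool) :
  0 <= \sum_(0 <= i < L) (b i)%:R :> int.
Proof. by apply: sumr_ge0 => i _; case: (b i). Qed.

Lemma sum_recl (F : nat -> int) L :
  \sum_(0 <= i < L.+1) F i = F 0%N + \sum_(0 <= i < L) F i.+1.
Proof. by rewrite big_nat_recl. Qed.
Lemma sum_recr (F : nat -> int) L :
  \sum_(0 <= i < L.+1) F i = \sum_(0 <= i < L) F i + F L.
Proof. by rewrite big_nat_recr. Qed.
Lemma sum_cat (F : nat -> int) m n :
  \sum_(0 <= i < m + n) F i = \sum_(0 <= i < m) F i + \sum_(0 <= i < n) F (m + i)%N.
Proof.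
rewrite (@big_cat_nat _ _ _ m) ?leq_addr //.
by rewrite -{2}[m]add0n big_addn addKn; congr (_ + _); apply: eq_big_nat => i _; rewrite addnC.
Qed.
Lemma sum_rev (F : nat -> int) L :
  \sum_(0 <= i < L) F i = \sum_(0 <= i < L) F (L - i.+1)%N.
Proof. by rewrite big_nat_rev. Qed.

Lemma split3 (F : int -> int) (a : int) (A B : nat) :
  \sum_(0 <= i < (A + B).+1) F (a + i%:Z) =
  \sum_(0 <= i < A.+1) F (a + i%:Z) + \sum_(0 <= i < B.+1) F (a + A%:Z + i%:Z) - F (a + A%:Z).
Proof.
rewrite -addSn sum_cat [\sum_(0 <= i < B.+1) _]sum_recl.
have -> : \sum_(0 <= i < B) F (a + (A.+1 + i)%N%:Z) = \sum_(0 <= i < B) F (a + A%:Z + i.+1%:Z).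
  by apply: eq_big_nat => i _; congr F; lia.
have -> : a + A%:Z + 0%N%:Z = a + A%:Z by lia.
lia.
Qed.

Lemma split_lr (F : int -> int) (a : int) (A B : nat) :
  \sum_(0 <= i < (A + B).+1) F (a + i%:Z) =
  \sum_(0 <= k < A) F (a + A%:Z - 1 - k%:Z) + F (a + A%:Z) +
  \sum_(0 <= k < B) F (a + A%:Z + 1 + k%:Z).
Proof.
rewrite split3 [\sum_(0 <= i < A.+1) _]sum_recr [\sum_(0 <= i < B.+1) _]sum_recl
  [\sum_(0 <= i < A) _]sum_rev.
have -> : a + A%:Z + 0%N%:Z = a + A%:Z by lia.
have -> : \sum_(0 <= i < A) F (a + (A - i.+1)%N%:Z) =
          \sum_(0 <= k < A) F (a + A%:Z - 1 - k%:Z).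
  by apply: eq_big_nat => i /andP [_ h]; congr F; lia.
have -> : \sum_(0 <= i < B) F (a + A%:Z + i.+1%:Z) =
          \sum_(0 <= k < B) F (a + A%:Z + 1 + k%:Z).
  by apply: eq_big_nat => i _; congr F; lia.
lia.
Qed.

Definition quadhyp (P : int -> int -> bool) (x1 : int) (L1 : nat) (y1 : int) (L2 : nat) :=
  forall i j : nat, (i <= L1)%N -> (j <= L2)%N ->
    P (x1 + i%:Z) (y1 + j%:Z) || P (x1 + (L1 - i)%N%:Z) (y1 + (L2 - j)%N%:Z).

Lemma quad P x1 L1 y1 L2 : quadhyp P x1 L1 y1 L2 ->
  ((L1.+1 * L2.+1)%N%:Z <= 2 * \sum_(0 <= i < L1.+1) \sum_(0 <= j < L2.+1)
      (P (x1 + i%:Z) (y1 + j%:Z))%:R).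
Proof.
move=> hq.
set T := \sum_(0 <= i < L1.+1) _.
have Tr : T = \sum_(0 <= i < L1.+1) \sum_(0 <= j < L2.+1)
      (P (x1 + (L1 - i)%N%:Z) (y1 + (L2 - j)%N%:Z))%:R.
  rewrite /T big_nat_rev; apply: eq_big_nat => i _.
  rewrite big_nat_rev; apply: eq_big_nat => j _.
  by rewrite !add0n !subSS.
have -> : 2 * T = T + T by rewrite mulr2n mulrDl mul1r.
rewrite {2}Tr -big_split /=.
apply: (@le_trans _ _ (\sum_(0 <= i < L1.+1) (L2.+1)%:Z)).
  rewrite sumr_const_nat subn0 -mulr_natr natz; lia.
apply: ler_sum_nat => i /andP [_ hi].
rewrite -big_split /=.
apply: (@le_trans _ _ (\sum_(0 <= j < L2.+1) (1 : int))).
  by rewrite sumr_const_nat subn0 natz.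
apply: ler_sum_nat => j /andP [_ hj].
by move: (hq i j hi hj); case: (P _ _); case: (P _ _).
Qed.

Lemma cheb (c : nat -> int) (B : nat) :
  (forall k k', (k <= k')%N -> (k' < B)%N -> c k' <= c k) ->
  2 * \sum_(0 <= k < B) (k.+1)%:Z * c k <= (B.+1)%:Z * \sum_(0 <= k < B) c k.
Proof.
move=> mono.
rewrite !mulr_sumr -subr_ge0 -sumrB.
set E := \sum_(0 <= k < B) _.
have Er : E = \sum_(0 <= k < B) ((B.+1)%:Z * c (B - k.+1)%N - 2 * ((B - k)%N%:Z * c (B - k.+1)%N)).
  rewrite /E big_nat_rev; apply: eq_big_nat => k /andP [_ hk].
  rewrite add0n; congr (_ - 2 * (_ * _)); lia.
suff : 0 <= E + E by lia.
rewrite {2}Er -big_split /=.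
rewrite big_nat_cond; apply: sumr_ge0 => k /andP [/andP [_ hk] _].
case: (leqP k (B - k.+1)) => h.
  have hb : (B - k.+1 < B)%N by lia.
  have := mono k (B - k.+1)%N h hb.
  nia.
have := mono (B - k.+1)%N k (ltnW h) hk.
nia.
Qed.

Lemma count_lb (P : int -> int -> bool) (a c : int) (A B C D : nat) :
  quadhyp P a A c C -> quadhyp P a A (c + C%:Z) D ->
  quadhyp P (a + A%:Z) B c C -> quadhyp P (a + A%:Z) B (c + C%:Z) D ->
  ((A + B).+2 * (C + D).+2)%N%:Z - 2 * ((A + B).+2)%:Z - 2 * ((C + D).+1)%:Z <=
  2 * \sum_(0 <= i < (A + B).+1) \sum_(0 <= j < (C + D).+1) (P (a + i%:Z) (c + j%:Z))%:R.
Proof.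
move=> hLL hLU hRL hRU.
pose QL x := \sum_(0 <= j < C.+1) (P x (c + j%:Z))%:R : int.
pose QU x := \sum_(0 <= j < D.+1) (P x (c + C%:Z + j%:Z))%:R : int.
pose Z x := (P x (c + C%:Z))%:R : int.
have E1 : forall x, \sum_(0 <= j < (C + D).+1) (P x (c + j%:Z))%:R = QL x + QU x - Z x.
  by move=> x; have E := split3 (fun y => (P x y)%:R : int) c C D; cbv beta in E; rewrite E.
under eq_big_nat => i _ do rewrite E1.
rewrite sumrB big_split /=.
have E2 := split3 QL a A B; cbv beta in E2; rewrite E2.
have E3 := split3 QU a A B; cbv beta in E3; rewrite E3.
have q1 := quad hLL; have q2 := quad hLU; have q3 := quad hRL; have q4 := quad hRU.
have z1 : QL (a + A%:Z) <= C.+1%:Z by apply: sum_ind_le.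
have z2 : QU (a + A%:Z) <= D.+1%:Z by apply: sum_ind_le.
have z3 : \sum_(0 <= i < (A + B).+1) Z (a + i%:Z) <= ((A + B).+1)%:Z by apply: sum_ind_le.
have z4 : forall x, 0 <= QL x by move=> x; apply: sum_ind_ge0.
rewrite /QL /QU in z1 z2 q1 q2 q3 q4 *.
set s1 := \sum_(0 <= i < A.+1) _ in q1 *.
set s2 := \sum_(0 <= i < A.+1) _ in q2 *.
set s3 := \sum_(0 <= i < B.+1) _ in q3 *.
set s4 := \sum_(0 <= i < B.+1) _ in q4 *.
move: q1 q2 q3 q4 z1 z2 z3.
set z := \sum_(0 <= i < (A + B).+1) _.
set u := \sum_(0 <= j < C.+1) _. set v := \sum_(0 <= j < D.+1) _.
nia.
Qed.

Definition fx (S : seq point) (x : int) : int := \sum_(t <- S) `|x - t.1|.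
Definition gy (S : seq point) (y : int) : int := \sum_(t <- S) `|y - t.2|.

Lemma Dq_split S q : \sum_(t <- S) l1dist q t = fx S q.1 + gy S q.2.
Proof. by rewrite /fx /gy -big_split. Qed.

Lemma conv_fx S u x v : u <= x -> x <= v -> fx S x + fx S (u + v - x) <= fx S u + fx S v.
Proof.
move=> h1 h2; rewrite /fx -!big_split /=; apply: ler_sum => t _; lia.
Qed.
Lemma conv_gy S u x v : u <= x -> x <= v -> gy S x + gy S (u + v - x) <= gy S u + gy S v.
Proof.
move=> h1 h2; rewrite /gy -!big_split /=; apply: ler_sum => t _; lia.
Qed.

Lemma sum_const_seq (S : seq point) (k : int) : \sum_(t <- S) k = k * (size S)%:Z.
Proof.
elim: S => [|x S IH]; first by rewrite big_nil mulr0.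
rewrite big_cons IH /=; lia.
Qed.

Lemma mem_iv a (W : nat) x : (x \in [seq a + i%:Z | i <- iota 0 W]) = (a <= x < a + W%:Z).
Proof.
apply/mapP/idP => [[i]|h].
  rewrite mem_iota => /andP [_ h] ->; lia.
exists `|x - a|%N; first by rewrite mem_iota; lia.
lia.
Qed.

Lemma count_int (T : Type) (P : pred T) (s : seq T) :
  (count P s)%:Z = \sum_(t <- s) (P t)%:R :> int.
Proof.
elim: s => [|x s IH]; first by rewrite big_nil.
by rewrite big_cons /= PoszD IH; case: (P x).
Qed.

Lemma fx_ge0 S x : 0 <= fx S x. Proof. by apply: sumr_ge0 => t _. Qed.
Lemma gy_ge0 S x : 0 <= gy S x. Proof. by apply: sumr_ge0 => t _. Qed.

Lemma argmin_pt (s : seq point) (phi : point -> int) : s != [::] ->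
  exists2 x : point, x \in s & forall y, y \in s -> phi x <= phi y.
Proof. move=> h; have [x xs H] := seq_argmin phi h; by exists x. Qed.
Lemma argmax_pt (s : seq point) (phi : point -> int) : s != [::] ->
  exists2 x : point, x \in s & forall y, y \in s -> phi y <= phi x.
Proof. move=> h; have [x xs H] := seq_argmax phi h; by exists x. Qed.
Lemma argmin_int (s : seq int) (phi : int -> int) : s != [::] ->
  exists2 x : int, x \in s & forall y, y \in s -> phi x <= phi y.
Proof. move=> h; have [x xs H] := seq_argmin phi h; by exists x. Qed.

Lemma arith (X Y n : int) : 7 <= X -> 0 <= Y -> X < 2*Y + 6 ->
  (X+2)*(Y+2) - 2*(X+2) - 2*(Y+1) <= 2*n -> (X+1-5)^+2 <= 4*n.
Proof.
move=> h1 h2 h3 h4.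
have h : X * (X - 5) <= X * (2 * Y) by rewrite ler_pM2l; lia.
have e : (X+2)*(Y+2) - 2*(X+2) - 2*(Y+1) = X * Y - 2 by ring.
have e2 : (X + 1 - 5)^+2 = X * (X - 5) - 3 * X + 16 by rewrite expr2; ring.
rewrite e2; move: h4 h; rewrite e; lia.
Qed.

Lemma core n S : (1 <= n)%N -> optimal_town n S ->
  exists W : nat, (width S <= W)%N /\ ((W <= 5)%N \/ ((W%:Z - 5) ^+ 2 <= 4 * n%:Z)).
Proof.
move=> n1 opt; have [[uS sS] _] := opt.
have Sne : S != [::] by apply/eqP => S0; move: sS n1; rewrite S0 /= => <-.
have [pm pmS pmH] := argmax_pt (fun q : point => fx S q.1 + gy S q.2) Sne.
set M := fx S pm.1 + gy S pm.2.
have char : forall q : point, (q \in S) = (fx S q.1 + gy S q.2 <= M).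
  move=> q; apply/idP/idP => [/pmH //|Hq].
  apply/negPn/negP => qS; have := exchange opt pmS qS; rewrite !Dq_split -/M => h; by move: (lt_le_trans h Hq); rewrite ltxx.
clearbody M; clear pm pmS pmH.
have [ta taS taH] := argmin_pt (fun t : point => t.1) Sne.
have [tb tbS tbH] := argmax_pt (fun t : point => t.1) Sne.
have [tc tcS tcH] := argmin_pt (fun t : point => t.2) Sne.
have [td tdS tdH] := argmax_pt (fun t : point => t.2) Sne.
move: taH tbH tcH tdH => /= taH tbH tcH tdH.
set a := ta.1 in taH *; set b := tb.1 in tbH *; set c := tc.2 in tcH *; set d := td.2 in tdH *.
have box : forall t : point, t \in S -> a <= t.1 <= b /\ c <= t.2 <= d.
  by move=> t tS; have:=taH t tS; have:=tbH t tS; have:=tcH t tS; have:=tdH t tS; lia.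
have ab : a <= b by have [] := box _ taS; lia.
have cd : c <= d by have [] := box _ tcS; lia.
pose W := `|b - a|%N.+1; pose H := `|d - c|%N.+1.
have boxW : forall t : point, t \in S -> a <= t.1 < a + W%:Z /\ c <= t.2 < c + H%:Z.
  by move=> t /box; rewrite /W /H; lia.
have ivne : forall (e : int) (L : nat), [seq e + i%:Z | i <- iota 0 L.+1] != [::] by [].
have [x0 x0in x0H] := argmin_int (fx S) (ivne a `|b - a|%N).
have [y0 y0in y0H] := argmin_int (gy S) (ivne c `|d - c|%N).
rewrite mem_iv in x0in; rewrite mem_iv in y0in.
have x0min : forall x : int, a <= x <= b -> fx S x0 <= fx S x.
  by move=> x hx; apply: x0H; rewrite mem_iv; lia.
have y0min : forall y : int, c <= y <= d -> gy S y0 <= gy S y.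
  by move=> y hy; apply: y0H; rewrite mem_iv; lia.
have ina : fx S a + gy S y0 <= M.
  have := taS; rewrite char -/a => h; have := y0min ta.2 (proj2 (box _ taS)); lia.
have inb : fx S b + gy S y0 <= M.
  have := tbS; rewrite char -/b => h; have := y0min tb.2 (proj2 (box _ tbS)); lia.
have inc : fx S x0 + gy S c <= M.
  have := tcS; rewrite char -/c => h; have := x0min tc.1 (proj1 (box _ tcS)); lia.
have ind : fx S x0 + gy S d <= M.
  have := tdS; rewrite char -/d => h; have := x0min td.1 (proj1 (box _ tdS)); lia.
have outc : M < fx S x0 + gy S (c - 1).
  have : (x0, c - 1) \notin S by apply/negP => /box /= [_]; lia.
  by rewrite char -ltNge.
have outd : M < fx S x0 + gy S (d + 1).
  have : (x0, d + 1) \notin S by apply/negP => /box /= [_]; lia.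
  by rewrite char -ltNge.
clearbody a b c d; clear ta tb tc td taS tbS tcS tdS taH tbH tcH tdH x0H y0H ivne.
have sumab : fx S a + fx S b = (b - a) * n%:Z.
  rewrite /fx -big_split /= (eq_big_seq (fun _ => b - a)) ?sum_const_seq ?sS //.
  by move=> t /box; lia.
have sumcd : gy S c + gy S d = (d - c) * n%:Z.
  rewrite /gy -big_split /= (eq_big_seq (fun _ => d - c)) ?sum_const_seq ?sS //.
  by move=> t /box; lia.
have gcm : gy S (c - 1) = gy S c + n%:Z.
  rewrite /gy (eq_big_seq (fun t : point => `|c - t.2| + 1)); last by move=> t /box; lia.
  by rewrite big_split /= sum_const_seq sS mul1r.
have gdp : gy S (d + 1) = gy S d + n%:Z.
  rewrite /gy (eq_big_seq (fun t : point => `|d - t.2| + 1)); last by move=> t /box; lia.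
  by rewrite big_split /= sum_const_seq sS mul1r.
have g0 := gy_ge0 S y0.
pose A := `|x0 - a|%N; pose B := `|b - x0|%N.
pose C := `|y0 - c|%N; pose D := `|d - y0|%N.
have WAB : W = (A + B).+1 by rewrite /W /A /B; lia.
have HCD : H = (C + D).+1 by rewrite /H /C /D; lia.
have aA : a + A%:Z = x0 by rewrite /A; lia.
have cC : c + C%:Z = y0 by rewrite /C; lia.
have hA : A%:Z = x0 - a by rewrite /A; lia.
have hB : B%:Z = b - x0 by rewrite /B; lia.
have hC : C%:Z = y0 - c by rewrite /C; lia.
have hD : D%:Z = d - y0 by rewrite /D; lia.
have hW : W%:Z = b - a + 1 by rewrite /W; lia.
have hH : H%:Z = d - c + 1 by rewrite /H; lia.
clearbody A B C D W H.
pose Col (x : int) : int := \sum_(0 <= j < H) ((x, c + j%:Z) \in S)%:R.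
have colsum : forall phi : int -> int, \sum_(t <- S) phi t.1 =
    \sum_(0 <= k < A) Col (x0 - 1 - k%:Z) * phi (x0 - 1 - k%:Z) + Col x0 * phi x0 +
    \sum_(0 <= k < B) Col (x0 + 1 + k%:Z) * phi (x0 + 1 + k%:Z).
  move=> phi; have := grid_sum (fun x _ => phi x) uS boxW; cbv beta => ->.
  rewrite -aA -(split_lr (fun x => Col x * phi x)) -WAB.
  by apply: eq_big_nat => i _; rewrite /Col mulr_suml.
pose L := \sum_(0 <= k < A) Col (x0 - 1 - k%:Z).
pose R := \sum_(0 <= k < B) Col (x0 + 1 + k%:Z).
have Col0 : forall x, 0 <= Col x by move=> x; apply: sum_ind_ge0.
have L0 : 0 <= L by apply: sumr_ge0 => k _.
have R0 : 0 <= R by apply: sumr_ge0 => k _.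
have nsum : n%:Z = L + Col x0 + R.
  have := colsum (fun _ => 1); rewrite sum_const_seq sS mul1r => ->.
  by rewrite mulr1; congr (_ + _ + _); apply: eq_big_nat => k _; rewrite mulr1.
have fsum : fx S x0 = \sum_(0 <= k < A) (k.+1)%:Z * Col (x0 - 1 - k%:Z) +
                      \sum_(0 <= k < B) (k.+1)%:Z * Col (x0 + 1 + k%:Z).
  rewrite /fx (colsum (fun x => `|x0 - x|)) subrr normr0 mulr0 addr0.
  congr (_ + _); apply: eq_big_nat => k _; rewrite mulrC; congr (_ * _); lia.
have medR : R <= L + Col x0.
  case: (posnP B) => [B0|Bp].
    by rewrite /R B0 big_geq // addr_ge0.
  have h1 : fx S x0 <= fx S (x0 + 1) by apply: x0min; lia.
  have : fx S (x0 + 1) - fx S x0 = L + Col x0 - R.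
    rewrite /fx -sumrB (colsum (fun x => `|x0 + 1 - x| - `|x0 - x|)).
    rewrite /L /R.
    have -> : `|x0 + 1 - x0| - `|x0 - x0| = 1 by lia.
    rewrite mulr1 -sumrN.
    have -> : \sum_(0 <= k < A) Col (x0 - 1 - k%:Z) * (`|x0 + 1 - (x0 - 1 - k%:Z)| - `|x0 - (x0 - 1 - k%:Z)|) =
      \sum_(0 <= k < A) Col (x0 - 1 - k%:Z).
      by apply: eq_big_nat => k _; rewrite (_ : `|x0 + 1 - (x0 - 1 - k%:Z)| - `|x0 - (x0 - 1 - k%:Z)| = 1) ?mulr1 //; lia.
    have -> : \sum_(0 <= k < B) Col (x0 + 1 + k%:Z) * (`|x0 + 1 - (x0 + 1 + k%:Z)| - `|x0 - (x0 + 1 + k%:Z)|) =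
      \sum_(0 <= k < B) - Col (x0 + 1 + k%:Z).
      by apply: eq_big_nat => k _; rewrite (_ : `|x0 + 1 - (x0 + 1 + k%:Z)| - `|x0 - (x0 + 1 + k%:Z)| = -1) ?mulrN1 //; lia.
    done.
  lia.
have medL : L <= R + Col x0.
  case: (posnP A) => [A0|Ap].
    by rewrite /L A0 big_geq // addr_ge0.
  have h1 : fx S x0 <= fx S (x0 - 1) by apply: x0min; lia.
  have : fx S (x0 - 1) - fx S x0 = R + Col x0 - L.
    rewrite /fx -sumrB (colsum (fun x => `|x0 - 1 - x| - `|x0 - x|)).
    rewrite /L /R.
    have -> : `|x0 - 1 - x0| - `|x0 - x0| = 1 by lia.
    rewrite mulr1 -sumrN.
    have -> : \sum_(0 <= k < A) Col (x0 - 1 - k%:Z) * (`|x0 - 1 - (x0 - 1 - k%:Z)| - `|x0 - (x0 - 1 - k%:Z)|) =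
      \sum_(0 <= k < A) - Col (x0 - 1 - k%:Z).
      by apply: eq_big_nat => k _; rewrite (_ : `|x0 - 1 - (x0 - 1 - k%:Z)| - `|x0 - (x0 - 1 - k%:Z)| = -1) ?mulrN1 //; lia.
    have -> : \sum_(0 <= k < B) Col (x0 + 1 + k%:Z) * (`|x0 - 1 - (x0 + 1 + k%:Z)| - `|x0 - (x0 + 1 + k%:Z)|) =
      \sum_(0 <= k < B) Col (x0 + 1 + k%:Z).
      by apply: eq_big_nat => k _; rewrite (_ : `|x0 - 1 - (x0 + 1 + k%:Z)| - `|x0 - (x0 + 1 + k%:Z)| = 1) ?mulr1 //; lia.
    by rewrite [RHS]addrC [X in _ = _ + X]addrC addrA.
  lia.
have colmono : forall x x' : int, fx S x <= fx S x' -> Col x' <= Col x.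
  move=> x x' h; apply: ler_sum_nat => j _; rewrite !char /=.
  case: (lerP (fx S x' + gy S (c + j%:Z)) M) => h1;
    case: (lerP (fx S x + gy S (c + j%:Z)) M) => h2 //; lia.
have fmonoR : forall x x' : int, x0 <= x -> x <= x' -> x' <= b -> fx S x <= fx S x'.
  move=> x x' h1 h2 h3; have := conv_fx S h1 h2.
  have := x0min (x0 + x' - x); lia.
have fmonoL : forall x x' : int, a <= x' -> x' <= x -> x <= x0 -> fx S x <= fx S x'.
  move=> x x' h1 h2 h3; have := conv_fx S h2 h3.
  have := x0min (x' + x0 - x); lia.
have chebR := @cheb (fun k => Col (x0 + 1 + k%:Z)) B.
have chebL := @cheb (fun k => Col (x0 - 1 - k%:Z)) A.
have {}chebR : 2 * \sum_(0 <= k < B) (k.+1)%:Z * Col (x0 + 1 + k%:Z) <= (B.+1)%:Z * R.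
  apply: chebR => k k' h1 h2; apply: colmono; apply: fmonoR; lia.
have {}chebL : 2 * \sum_(0 <= k < A) (k.+1)%:Z * Col (x0 - 1 - k%:Z) <= (A.+1)%:Z * L.
  apply: chebL => k k' h1 h2; apply: colmono; apply: fmonoL; lia.
have meandev : 4 * fx S x0 <= n%:Z * (b - a + 2).
  have e1 : (A.+1)%:Z * L <= (A.+1)%:Z * (R + Col x0) by rewrite ler_wpM2l.
  have e2 : (B.+1)%:Z * R <= (B.+1)%:Z * (L + Col x0) by rewrite ler_wpM2l.
  have e3 : 0 <= (A.+1)%:Z * Col x0 by rewrite mulr_ge0.
  have e4 : 0 <= (B.+1)%:Z * Col x0 by rewrite mulr_ge0.
  have ba : b - a = A%:Z + B%:Z by lia.
  rewrite fsum nsum ba.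
  move: chebL chebR e1 e2 e3 e4.
  set sL := \sum_(0 <= k < A) _; set sR := \sum_(0 <= k < B) _.
  nia.
have bal : b - a < 2 * (d - c) + 6.
  have n0 : 0 < n%:Z by lia.
  have key : (b - a) * n%:Z < (2 * (d - c) + 6) * n%:Z by lia.
  by rewrite ltr_pM2r in key.
pose P := fun x y => (x, y) \in S.
have qh : forall x1 (L1 : nat) y1 (L2 : nat),
    fx S x1 + fx S (x1 + L1%:Z) + gy S y1 + gy S (y1 + L2%:Z) <= 2 * M ->
    quadhyp P x1 L1 y1 L2.
  move=> x1 L1 y1 L2 hq i j hi hj; rewrite /P !char /=.
  have e1 : x1 + (L1 - i)%N%:Z = x1 + (x1 + L1%:Z) - (x1 + i%:Z) by lia.
  have e2 : y1 + (L2 - j)%N%:Z = y1 + (y1 + L2%:Z) - (y1 + j%:Z) by lia.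
  rewrite e1 e2.
  have c1 : fx S (x1 + i%:Z) + fx S (x1 + (x1 + L1%:Z) - (x1 + i%:Z)) <= fx S x1 + fx S (x1 + L1%:Z).
    by apply: conv_fx; lia.
  have c2 : gy S (y1 + j%:Z) + gy S (y1 + (y1 + L2%:Z) - (y1 + j%:Z)) <= gy S y1 + gy S (y1 + L2%:Z).
    by apply: conv_gy; lia.
  case: (lerP (fx S (x1 + i%:Z) + gy S (y1 + j%:Z)) M) => //= h1; lia.
have cnt : ((A + B).+2 * (C + D).+2)%N%:Z - 2 * ((A + B).+2)%:Z - 2 * ((C + D).+1)%:Z <=
    2 * n%:Z.
  have -> : n%:Z = \sum_(0 <= i < (A + B).+1) \sum_(0 <= j < (C + D).+1) (P (a + i%:Z) (c + j%:Z))%:R.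
    rewrite -sS -[(size S)%:Z]mul1r -sum_const_seq.
    have := grid_sum (fun _ _ => 1) uS boxW; cbv beta => ->.
    rewrite -WAB -HCD; apply: eq_big_nat => i _; apply: eq_big_nat => j _.
    by rewrite mulr1.
  have x0B : x0 + B%:Z = b by lia.
  have y0D : y0 + D%:Z = d by lia.
  apply: count_lb; apply: qh; rewrite ?aA ?cC ?x0B ?y0D; lia.
have wid : (width S <= W)%N.
  rewrite /width; apply/bigmax_leqP_seq => p pS _.
  rewrite size_filter -lez_nat count_int.
  have := grid_sum (fun _ y => (y == p.2)%:R) uS boxW; cbv beta => ->.
  apply: (@le_trans _ _ (\sum_(0 <= i < W) (1 : int))); last first.
    by rewrite sumr_const_nat subn0 natz.
  apply: ler_sum_nat => i _.
  apply: (@le_trans _ _ (\sum_(0 <= j < H) (p.2 == c + j%:Z)%:R * (1 : int))).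
    apply: ler_sum_nat => j _; rewrite eq_sym.
    by case: (_ \in _); case: (_ == _).
  rewrite sum_ind1 //; have [_] := boxW p pS; exact (fun h => h).
exists W; split => //.
have WE : ((A + B).+1)%:Z = b - a + 1 by rewrite -WAB.
have HE : ((C + D).+1)%:Z = d - c + 1 by rewrite -HCD.
rewrite WAB.
have n0 : 1 <= n%:Z by lia.
case: (leqP (A + B) 6) => hX.
  case: (leqP (A + B).+1 5) => hW5; [by left | right].
  have : (A + B = 5)%N \/ (A + B = 6)%N by lia.
  by case=> ->; rewrite /=; lia.
right.
have E1 : ((A + B).+2 * (C + D).+2)%N%:Z = ((A+B)%:Z + 2) * ((C+D)%:Z + 2).
  by rewrite PoszM; congr (_ * _); lia.
rewrite E1 in cnt.
have -> : ((A + B).+1)%:Z = (A+B)%:Z + 1 by lia.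
apply: (@arith _ (C + D)%:Z); [lia | lia | lia | ].
move: cnt; rewrite !PoszD /=; lia.
Qed.

Definition sw (p : point) : point := (p.2, p.1).
Lemma sw_inj : injective sw. Proof. by case=> [x y] [u v] [-> ->]. Qed.
Lemma swK : involutive sw. Proof. by case. Qed.

Lemma cost_sw T : cost (map sw T) = cost T.
Proof.
rewrite /cost.
have -> : \sum_(s <- map sw T) \sum_(t <- map sw T) l1dist s t =
          \sum_(s <- T) \sum_(t <- T) l1dist s t.
  rewrite big_map; apply: eq_bigr => s _; rewrite big_map; apply: eq_bigr => t _.
  rewrite /l1dist /=; lia.
by [].
Qed.

Lemma town_sw n T : is_town n T -> is_town n (map sw T).
Proof. by case=> u s; split; rewrite ?size_map // map_inj_uniq //; apply: sw_inj. Qed.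

Lemma opt_sw n S : optimal_town n S -> optimal_town n (map sw S).
Proof.
case=> tS H; split; first exact: town_sw.
move=> T /town_sw /H; by rewrite !cost_sw.
Qed.

Lemma width_sw S : width (map sw S) = height S.
Proof.
rewrite /width /height big_map; apply: eq_bigr => p _.
by rewrite /Defs.row /column filter_map size_map.
Qed.


Lemma core_nat n S : (1 <= n)%N -> optimal_town n S ->
  exists W k : nat, (width S <= W)%N /\ (W <= k + 5)%N /\ (k * k <= 4 * n)%N.
Proof.
move=> n1 opt; have [W [h1 [h2|h2]]] := core n1 opt.
  by exists W, 0%N; split => //; split; lia.
case: (leqP W 5) => h3; first by exists W, 0%N; split => //; split; lia.
exists W, (W - 5)%N; split => //; split; first by lia.
have e : ((W - 5) * (W - 5))%N%:Z = (W%:Z - 5) ^+ 2 :> int.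
  by rewrite expr2 PoszM; congr (_ * _); lia.
have : ((W - 5) * (W - 5))%N%:Z <= (4 * n)%N%:Z :> int by rewrite e PoszM.
by rewrite lez_nat.
Qed.

End Aux.
Import Aux.

From Stdlib Require Import Reals Lra.

Module Aux2.

Lemma fin (w n k : nat) : (w <= k + 5)%N -> (k * k <= 4 * n)%N ->
  (INR w <= 2 * sqrt (INR n) + 5)%R.
Proof.
move=> h1 h2.
have e1 : (INR w <= INR k + 5)%R.
  have : (w <= k + 5)%coq_nat by apply/ssrnat.leP.
  move/le_INR; rewrite -plusE plus_INR /=; lra.
have e2 : (INR k * INR k <= 4 * INR n)%R.
  have : (k * k <= 4 * n)%coq_nat by apply/ssrnat.leP.
  move/le_INR; rewrite -!multE !mult_INR /=; lra.
have hk : (0 <= INR k)%R by apply: pos_INR.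
have hn : (0 <= INR n)%R by apply: pos_INR.
have : (INR k <= 2 * sqrt (INR n))%R.
  rewrite -(sqrt_pow2 (INR k)) //.
  have -> : (2 * sqrt (INR n) = sqrt (4 * INR n))%R.
    rewrite sqrt_mult; try lra.
    have -> : (4 = 2 ^ 2)%R by lra.
    rewrite sqrt_pow2; lra.
  apply: sqrt_le_1_alt; simpl; lra.
lra.
Qed.

Lemma fin2 n S : (1 <= n)%N -> optimal_town n S ->
  (INR (width S) <= 2 * sqrt (INR n) + 5)%R.
Proof.
move=> n1 opt; have [W [k [h1 [h2 h3]]]] := core_nat n1 opt.
apply: (@fin _ n k) => //; exact: leq_trans h1 h2.
Qed.


End Aux2.
Import Aux2.

Theorem lemma5 (n : nat) (S : seq point) :
  (1 <= n)%N -> optimal_town n S ->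
  (INR (maxn (width S) (height S)) <= 2 * sqrt (INR n) + 5)%R.
Proof.
move=> n1 opt.
case: (leqP (width S) (height S)) => h.
  rewrite -width_sw; apply: fin2 => //; exact: opt_sw.
exact: fin2.
Qed.
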